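(* Let $A\subseteq B$ be a ring extension (commutative rings with identity) with the finite character. Then every $B$-regular and locally finitely generated ideal of $A$ is finitely generated.
   Context: An $A$-submodule $S$ of $B$ is called $B$-regular if $SB=B$. The extension $A\subseteq B$ has the finite character if every $B$-regular ideal of $A$ is contained in only finitely many maximal ideals of $A$. An ideal $\mathfrak a$ of $A$ is locally finitely generated if $\mathfrak aA_{\mathfrak m}$ is a finitely generated ideal of $A_{\mathfrak m}$ for every maximal ideal $\mathfrak m$ of $A$. *)

(* Defs.v *)
From HB Require Import structures.
From mathcomp Require Import all_boot all_algebra.
Set Implicit Arguments.
Unset Strict Implicit.
Unset Printing Implicit Defensive.
Import GRing.Theory.
Local Open Scope ring_scope.

(* Ideals of a commutative ring are represented as predicates A -> Prop.
   Ring extension A ⊆ B is represented by an injective ring morphism f. *)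

Section Ideals.
Variable A : comPzRingType.

Definition is_ideal (I : A -> Prop) : Prop :=
  I 0 /\ (forall x y, I x -> I y -> I (x + y)) /\ (forall a x, I x -> I (a * x)).

Definition is_maximal_ideal (M : A -> Prop) : Prop :=
  is_ideal M /\ ~ M 1 /\
  forall J : A -> Prop, is_ideal J -> (forall x, M x -> J x) ->
    (forall x, J x <-> M x) \/ (forall x, J x).

Definition finitely_generated (I : A -> Prop) : Prop :=
  exists n (g : 'I_n -> A), (forall i, I (g i)) /\
    forall x, I x -> exists r : 'I_n -> A, x = \sum_(i < n) r i * g i.

(* ---- Localization A_m, encoded by fractions (a, s) with s outside m ---- *)
Definition frac := (A * A)%type.
Definition frac_one : frac := (1, 1).
Definition frac_zero : frac := (0, 1).
Definition frac_add (p q : frac) : frac := (p.1 * q.2 + q.1 * p.2, p.2 * q.2).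
Definition frac_mul (p q : frac) : frac := (p.1 * q.1, p.2 * q.2).

Definition in_loc (m : A -> Prop) (p : frac) : Prop := ~ m p.2.

Definition frac_eq (m : A -> Prop) (p q : frac) : Prop :=
  exists u, ~ m u /\ u * (p.1 * q.2 - q.1 * p.2) = 0.

Definition ext_ideal (m : A -> Prop) (I : A -> Prop) (p : frac) : Prop :=
  in_loc m p /\
  exists n (a : 'I_n -> A) (r : 'I_n -> frac),
    (forall i, I (a i)) /\ (forall i, in_loc m (r i)) /\
    frac_eq m p (\big[frac_add/frac_zero]_(i < n) frac_mul (a i, 1) (r i)).

Definition loc_finitely_generated (m : A -> Prop) (J : frac -> Prop) : Prop :=
  exists n (g : 'I_n -> frac), (forall i, J (g i)) /\
    forall p, J p -> exists r : 'I_n -> frac, (forall i, in_loc m (r i)) /\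
      frac_eq m p (\big[frac_add/frac_zero]_(i < n) frac_mul (r i) (g i)).

Definition locally_finitely_generated (I : A -> Prop) : Prop :=
  forall m, is_maximal_ideal m -> loc_finitely_generated m (ext_ideal m I).

End Ideals.

Section Extension.
Variables (A B : comPzRingType) (f : {rmorphism A -> B}).

(* S B = B, for the A-submodule S = f(I) of B *)
Definition B_regular (I : A -> Prop) : Prop :=
  forall y : B, exists n (s : 'I_n -> A) (b : 'I_n -> B),
    (forall i, I (s i)) /\ y = \sum_(i < n) f (s i) * b i.

Definition finite_character : Prop :=
  forall I : A -> Prop, is_ideal I -> B_regular I ->
    exists n (Ms : 'I_n -> (A -> Prop)),
      forall M, is_maximal_ideal M -> (forall x, I x -> M x) ->
        exists i, forall x, M x <-> Ms i x.

End Extension.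

(* Main.v *)
Require Import Defs.
From mathcomp Require Import all_boot all_algebra.
From mathcomp Require Import ring.
From mathcomp Require Import boolp classical_sets.
Set Implicit Arguments. Unset Strict Implicit. Unset Printing Implicit Defensive.
Import GRing.Theory.
Local Open Scope ring_scope.

Fixpoint lin (A : comPzRingType) (L : seq A) (x : A) : Prop :=
  match L with
  | [::] => x = 0
  | a :: L' => exists c y, lin L' y /\ x = c * a + y
  end.

Lemma lin0 (A : comPzRingType) (L : seq A) : lin L 0.
Proof. elim: L => [|a L IH] //=; exists 0, 0; split => //; by rewrite mul0r addr0. Qed.

Lemma linD (A : comPzRingType) (L : seq A) x y : lin L x -> lin L y -> lin L (x + y).
Proof.
elim: L x y => [|a L IH] x y /=; first by move=> -> ->; rewrite addr0.
move=> [c [x' [Hx ->]]] [d [y' [Hy ->]]]; exists (c + d), (x' + y'); split; first exact: IH.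
ring.
Qed.

Lemma linM (A : comPzRingType) (L : seq A) c x : lin L x -> lin L (c * x).
Proof.
elim: L x => [|a L IH] x /=; first by move=> ->; rewrite mulr0.
move=> [d [x' [Hx ->]]]; exists (c * d), (c * x'); split; first exact: IH.
ring.
Qed.

Lemma lin_mem (A : comPzRingType) (L : seq A) a : a \in L -> lin L a.
Proof.
elim: L => [|b L IH] //=; rewrite inE => /orP [/eqP ->|H].
  exists 1, 0; split; [exact: lin0 | by rewrite mul1r addr0].
exists 0, a; split; [exact: IH | by rewrite mul0r add0r].
Qed.

Lemma lin_sub (A : comPzRingType) (L L' : seq A) x :
  {subset L <= L'} -> lin L x -> lin L' x.
Proof.
elim: L x => [|a L IH] x HL /=; first by move=> ->; exact: lin0.
move=> [c [y [Hy ->]]]; apply: linD; last first.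
  by apply: IH => // z Hz; apply: HL; rewrite inE Hz orbT.
by apply: linM; apply: lin_mem; apply: HL; rewrite inE eqxx.
Qed.

Lemma lin_I (A : comPzRingType) (I : A -> Prop) (HI : is_ideal I) (L : seq A) x :
  (forall a, a \in L -> I a) -> lin L x -> I x.
Proof.
case: HI => [H0 [HD HM]].
elim: L x => [|a L IH] x HL /=; first by move=> ->.
move=> [c [y [Hy ->]]]; apply: HD; first by apply: HM; apply: HL; rewrite inE eqxx.
by apply: IH => // z Hz; apply: HL; rewrite inE Hz orbT.
Qed.

Lemma lin_fg (A : comPzRingType) (L : seq A) x :
  lin L x -> exists r : nat -> A, x = \sum_(i < size L) r i * L`_i.
Proof.
elim: L x => [|a L IH] x /=; first by move=> ->; exists (fun _ => 0); rewrite big_ord0.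
move=> [c [y [/IH [r Hr] ->]]].
exists (fun k => if k is k'.+1 then r k' else c).
by rewrite big_ord_recl /= Hr.
Qed.

Lemma max_prime (A : comPzRingType) (m : A -> Prop) : is_maximal_ideal m ->
  forall u v, ~ m u -> ~ m v -> ~ m (u * v).
Proof.
move=> [[H0 [HD HM]] [H1 Hmax]] u v Hu Hv Huv.
pose J := fun x => exists y a, m y /\ x = y + a * u.
have HJ : is_ideal J.
  split; first by exists 0, 0; rewrite mul0r addr0.
  split.
    move=> x z [y [a [Hy ->]]] [y' [a' [Hy' ->]]]; exists (y + y'), (a + a'); split.
      exact: HD.
    ring.
  move=> b x [y [a [Hy ->]]]; exists (b * y), (b * a); split; first exact: HM.
  ring.
have HmJ : forall x, m x -> J x by move=> x Hx; exists x, 0; rewrite mul0r addr0.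
case: (Hmax J HJ HmJ) => [HJm|Hall].
  by apply: Hu; apply/HJm; exists 0, 1; rewrite mul1r add0r.
case: (Hall 1) => y [a [Hy Hya]].
apply: Hv; have -> : v = v * y + a * (u * v) by rewrite -[LHS]mulr1 Hya; ring.
by apply: HD; apply: HM.
Qed.

Definition Sf (A : comPzRingType) (m : A -> Prop) (L : seq A) (p : Defs.frac A) :=
  ~ m p.2 /\ exists u, ~ m u /\ lin L (u * p.1).

Lemma Sf_sub (A : comPzRingType) (m : A -> Prop) (L L' : seq A) p :
  {subset L <= L'} -> Sf m L p -> Sf m L' p.
Proof. by move=> HL [H2 [u [Hu Hl]]]; split => //; exists u; split => //; exact: lin_sub Hl. Qed.

Lemma Sf_zero (A : comPzRingType) (m : A -> Prop) L :
  is_maximal_ideal m -> Sf m L (frac_zero A).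
Proof.
move=> [_ [H1 _]]; split => //; exists 1; split => //=; rewrite mulr0; exact: lin0.
Qed.

Lemma Sf_add (A : comPzRingType) (m : A -> Prop) L p q :
  is_maximal_ideal m -> Sf m L p -> Sf m L q -> Sf m L (frac_add p q).
Proof.
move=> Hm [Hp [u [Hu Hlu]]] [Hq [v [Hv Hlv]]]; split; first exact: max_prime.
exists (u * v); split; first exact: max_prime.
have -> : u * v * (frac_add p q).1 = (v * q.2) * (u * p.1) + (u * p.2) * (v * q.1).
  rewrite /frac_add /=; ring.
by apply: linD; apply: linM.
Qed.

Lemma Sf_mull (A : comPzRingType) (m : A -> Prop) L p q :
  is_maximal_ideal m -> Sf m L p -> in_loc m q -> Sf m L (frac_mul p q).
Proof.
move=> Hm [Hp [u [Hu Hlu]]] Hq; split; first exact: max_prime.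
exists u; split => //.
have -> : u * (frac_mul p q).1 = q.1 * (u * p.1) by rewrite /frac_mul /=; ring.
exact: linM.
Qed.

Lemma Sf_mulr (A : comPzRingType) (m : A -> Prop) L p q :
  is_maximal_ideal m -> Sf m L p -> in_loc m q -> Sf m L (frac_mul q p).
Proof.
move=> Hm [Hp [u [Hu Hlu]]] Hq; split; first exact: max_prime.
exists u; split => //.
have -> : u * (frac_mul q p).1 = q.1 * (u * p.1) by rewrite /frac_mul /=; ring.
exact: linM.
Qed.

Lemma Sf_gen (A : comPzRingType) (m : A -> Prop) L a :
  is_maximal_ideal m -> a \in L -> Sf m L (a, 1).
Proof.
move=> [_ [H1 _]] Ha; split => //; exists 1; split => //=; rewrite mul1r; exact: lin_mem.
Qed.

Lemma Sf_eq (A : comPzRingType) (m : A -> Prop) L p q :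
  is_maximal_ideal m -> in_loc m p -> frac_eq m p q -> Sf m L q -> Sf m L p.
Proof.
move=> Hm Hp [w [Hw Heq]] [Hq [v [Hv Hl]]]; split => //.
exists (w * v * q.2); split; first by do 2 apply: max_prime => //.
have H : w * (p.1 * q.2) = w * (q.1 * p.2).
  by apply/eqP; rewrite -subr_eq0 -mulrBr Heq.
have -> : w * v * q.2 * p.1 = (p.2 * w) * (v * q.1).
  transitivity (v * (w * (p.1 * q.2))); first ring.
  rewrite H; ring.
exact: linM.
Qed.

Lemma ext_to_Sf (A : comPzRingType) (m : A -> Prop) (I : A -> Prop) p :
  is_maximal_ideal m -> ext_ideal m I p ->
  exists L : seq A, (forall a, a \in L -> I a) /\ Sf m L p.
Proof.
move=> Hm [Hp [n [a [r [Ha [Hr Heq]]]]]].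
exists (codom a); split; first by move=> z /codomP [i ->].
apply: (Sf_eq Hm Hp Heq).
apply: (big_ind (Sf m (codom a))); first exact: Sf_zero.
  by move=> x y; apply: Sf_add.
move=> i _; apply: Sf_mull => //; apply: Sf_gen => //; exact: codom_f.
Qed.

Lemma local_step (A : comPzRingType) (m : A -> Prop) (I : A -> Prop) :
  is_maximal_ideal m -> loc_finitely_generated m (ext_ideal m I) ->
  exists L : seq A, (forall a, a \in L -> I a) /\
    forall x, I x -> exists u, ~ m u /\ lin L (u * x).
Proof.
move=> Hm [n [g [Hg Hgen]]].
have : forall i : 'I_n, exists L : seq A, (forall a, a \in L -> I a) /\ Sf m L (g i).
  by move=> i; apply: ext_to_Sf.
case/fin_all_exists => Lf HLf.
pose L := flatten [seq Lf i | i <- enum 'I_n].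
have subL : forall i, {subset Lf i <= L}.
  by move=> i z Hz; apply/flatten_mapP; exists i => //; rewrite mem_enum.
exists L; split.
  by move=> z /flatten_mapP [i _ Hz]; case: (HLf i) => H _; apply: H.
have H1 : ~ m 1 by case: Hm => _ [].
move=> x Hx.
have Hext : ext_ideal m I (x, 1).
  split => //; exists 1%N, (fun _ => x), (fun _ => frac_one A); split => //.
  split => //; exists 1; split => //.
  rewrite big_ord_recl big_ord0 /frac_add /frac_mul /frac_zero /frac_one /=; ring.
case: (Hgen _ Hext) => r [Hr Heq].
have : Sf m L (x, 1).
  apply: (Sf_eq Hm _ Heq) => //.
  apply: (big_ind (Sf m L)); first exact: Sf_zero.
    by move=> y z; apply: Sf_add.
  move=> i _; apply: Sf_mulr => //; apply: (Sf_sub (subL i)); by case: (HLf i).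
by case=> _ [u [Hu Hl]]; exists u; split => //; rewrite mulr1 in Hl.
Qed.

Lemma exists_max (A : comPzRingType) (C : A -> Prop) :
  is_ideal C -> ~ C 1 -> exists M, is_maximal_ideal M /\ forall x, C x -> M x.
Proof.
move=> HC HC1.
pose T := {J : A -> Prop | is_ideal J /\ (forall x, C x -> J x) /\ ~ J 1}.
have t0 : T by exists C; split => //.
pose R (s t : T) := `[< forall x, sval s x -> sval t x >].
have [| | |t Ht] := @ZL_preorder T t0 R.
- by move=> s; apply/asboolP.
- by move=> r s t /asboolP H1 /asboolP H2; apply/asboolP => x /H1 /H2.
- move=> Ach Htot.
  pose U := fun x => C x \/ exists s, Ach s /\ sval s x.
  have HU : is_ideal U /\ (forall x, C x -> U x) /\ ~ U 1.
    case: (HC) => [HC0 [HCD HCM]].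
    split; last first.
      split; first by move=> x; left.
      by case=> [//|[s [_ Hs]]]; case: (svalP s) => _ [_]; apply.
    split; first by left.
    split.
      move=> x y [Cx|[s [As sx]]] [Cy|[t [At ty]]].
      + by left; apply: HCD.
      + right; exists t; split => //; case: (svalP t) => [[_ [HD _]] [HCt _]].
        by apply: HD => //; apply: HCt.
      + right; exists s; split => //; case: (svalP s) => [[_ [HD _]] [HCs _]].
        by apply: HD => //; apply: HCs.
      + case: (Htot s t As At) => /asboolP Hst.
          right; exists t; split => //; case: (svalP t) => [[_ [HD _]] _].
          by apply: HD => //; apply: Hst.
        right; exists s; split => //; case: (svalP s) => [[_ [HD _]] _].
        by apply: HD => //; apply: Hst.
    move=> a x [Cx|[s [As sx]]]; first by left; apply: HCM.
    right; exists s; split => //; case: (svalP s) => [[_ [_ HM]] _]; exact: HM.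
  exists (exist _ U HU) => s As; apply/asboolP => x sx /=; right; exists s; split => //.
- exists (sval t); case: (svalP t) => [HtI [HCt Ht1]]; split => //.
  split => //; split => // J HJ HtJ.
  have [J1|J1] := pselect (J 1).
    by right => x; rewrite -[x]mulr1; case: HJ => _ [_]; apply.
  left.
  have HJT : is_ideal J /\ (forall x, C x -> J x) /\ ~ J 1.
    by split => //; split => // x /HCt; apply: HtJ.
  have /Ht /asboolP /= HJt : R t (exist _ J HJT) by apply/asboolP.
  by move=> x; split; [apply: HJt | apply: HtJ].
Qed.

Lemma per_i (A : comPzRingType) (I : A -> Prop) (Hloc : locally_finitely_generated I)
  (Mi : A -> Prop) :
  exists L : seq A, (forall a, a \in L -> I a) /\
    forall M, is_maximal_ideal M -> (forall x, M x <-> Mi x) ->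
      forall x, I x -> exists u, ~ M u /\ lin L (u * x).
Proof.
have [[M0 [HM0 HM0i]]|N] := pselect (exists M, is_maximal_ideal M /\ forall x, M x <-> Mi x).
  have [L [HL HLx]] := local_step HM0 (Hloc M0 HM0).
  exists L; split => // M HM HMi x Hx.
  have [u [Hu Hl]] := HLx x Hx; exists u; split => // /HMi /HM0i; exact: Hu.
exists [::]; split => // M HM HMi; exfalso; apply: N; by exists M.
Qed.

Local Close Scope ring_scope.

Theorem proposition3p4 (A B : comPzRingType) (f : {rmorphism A -> B})
  (f_inj : injective f) (Hfc : finite_character f)
  (I : A -> Prop) (HI : is_ideal I) (Hreg : B_regular f I)
  (Hloc : locally_finitely_generated I) :
  finitely_generated I.
Proof.
have [n0 [s [b [Hs H1]]]] := Hreg 1%R.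
pose L0 := codom s.
pose J0 := lin L0.
have HJ0 : is_ideal J0.
  split; first exact: lin0.
  split; [by move=> x y; apply: linD | by move=> a x; apply: linM].
have HJ0reg : B_regular f J0.
  move=> y; exists n0, s, (fun i => (b i * y)%R); split.
    by move=> i; apply: lin_mem; apply: codom_f.
  rewrite -[y in LHS]mul1r H1 mulr_suml; apply: eq_bigr => i _; by rewrite mulrA.
have [k [Ms HMs]] := Hfc J0 HJ0 HJ0reg.
have /fin_all_exists [Lf HLf] := fun i : 'I_k => per_i Hloc (Ms i).
pose L := L0 ++ flatten [seq Lf i | i <- enum 'I_k].
have HLI : forall a, a \in L -> I a.
  move=> a; rewrite mem_cat => /orP [/codomP [i ->]|]; first exact: Hs.
  by move=> /flatten_mapP [i _ Hz]; case: (HLf i) => H _; apply: H.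
have main : forall x, I x -> lin L x.
  move=> x Hx.
  pose C := fun a => lin L (a * x)%R.
  have HC : is_ideal C.
    split; first by rewrite /C mul0r; exact: lin0.
    split; first by move=> a c Ha Hc; rewrite /C mulrDl; apply: linD.
    by move=> a c Hc; rewrite /C -mulrA; apply: linM.
  have [C1|C1] := pselect (C 1%R); first by rewrite /C mul1r in C1.
  have [M [HM HCM]] := exists_max HC C1.
  have HJM : forall y, J0 y -> M y.
    move=> y Hy; apply: HCM; rewrite /C mulrC; apply: linM.
    by apply: (lin_sub _ Hy) => z Hz; rewrite mem_cat Hz.
  have [i Hi] := HMs M HM HJM.
  case: (HLf i) => _ /(_ M HM Hi x Hx) [u [Hu Hl]].
  exfalso; apply: Hu; apply: HCM; apply: (lin_sub _ Hl) => z Hz.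
  by rewrite mem_cat; apply/orP; right; apply/flatten_mapP; exists i => //; rewrite mem_enum.
exists (size L), (fun i => L`_i)%R; split.
  by move=> i; apply: HLI; apply: mem_nth.
move=> x /main /lin_fg [r Hr]; by exists (fun i => r i).
Qed.
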